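(* Let $P\in\mathbb{R}[x]$ have degree $n\ge 2$, and let $r_1,\dots,r_m\in\mathbb{C}$ be its distinct complex roots with multiplicities $\mu_1\ge\mu_2\ge\cdots\ge\mu_m\ge1$, so that $\operatorname{mult}(P)=\boldsymbol\mu=(\mu_1,\dots,\mu_m)$. Let $\bar{\boldsymbol\mu}=(\bar\mu_1,\dots,\bar\mu_n)$ be the conjugate of $\boldsymbol\mu$, i.e. $\bar\mu_i=\#\{j\in\{1,\dots,m\}:\mu_j\ge i\}$. For $1\le i\le n$ let $G_i=\gcd(P^{(0)},P^{(1)},\dots,P^{(i)})$, where $P^{(k)}$ denotes the $k$-th derivative of $P$ with respect to $x$. Then for every $1\le i\le n$, $$R_{(\bar\mu_1,\dots,\bar\mu_i)}\big(P^{(0)},P^{(1)},\dots,P^{(i)}\big)=c_i\prod_{k:\ \mu_k>i}(x-r_k)^{\mu_k-i}$$ for some nonzero constant $c_i$; in particular $R_{(\bar\mu_1,\dots,\bar\mu_i)}(P^{(0)},\dots,P^{(i)})$ equals $G_i$ up to a nonzero constant factor. (In other words, the incremental gcd $(G_1,\dots,G_n)$ of $(P^{(0)},\dots,P^{(n)})$ is, up to nonzero constant factors, $\big(R_{(\bar\mu_1)},R_{(\bar\mu_1,\bar\mu_2)},\dots,R_{(\bar\mu_1,\dots,\bar\mu_n)}\big)$.)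
   Context: Subresultants of several polynomials. Let $\boldsymbol F=(F_0,F_1,\dots,F_t)$ be polynomials in $x$ with $d_i=\deg F_i$ and $F_i=\sum_{j=0}^{d_i}a_{ij}x^j$, $a_{0d_0}\neq0$. For $\boldsymbol\delta=(\delta_1,\dots,\delta_t)\in\mathbb{Z}_{\ge0}^t$ with $|\boldsymbol\delta|:=\delta_1+\cdots+\delta_t\le d_0$, put $\delta_0=\max_{1\le i\le t,\ \delta_i\neq0}(d_i+\delta_i)-d_0$ if this maximum is $\ge d_0$, and $\delta_0=1$ otherwise. The generalized Sylvester matrix $\boldsymbol M_{\boldsymbol\delta}(\boldsymbol F)$ is the $(\delta_0+|\boldsymbol\delta|)\times(\delta_0+d_0)$ matrix whose rows are, in this order, the coefficient vectors of $x^{\delta_0-1}F_0,\dots,x^0F_0,\ x^{\delta_1-1}F_1,\dots,x^0F_1,\ \dots,\ x^{\delta_t-1}F_t,\dots,x^0F_t$ with respect to the monomials $x^{\delta_0+d_0-1},\dots,x,1$ (a polynomial $F_i$ with $\delta_i=0$ contributes no rows). For a $p\times q$ matrix $\boldsymbol M$ with $p\le q$ and columns $\boldsymbol M_1,\dots,\boldsymbol M_q$, its determinant polynomial is $\operatorname{dp}\boldsymbol M=\sum_{i=0}^{q-p}\det[\boldsymbol M_1,\dots,\boldsymbol M_{p-1},\boldsymbol M_{q-i}]\,x^i$. The $\boldsymbol\delta$-th subresultant is $R_{\boldsymbol\delta}(\boldsymbol F)=\operatorname{dp}\boldsymbol M_{\boldsymbol\delta}(\boldsymbol F)$. *)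

(* Defs.v *)
From HB Require Import structures.
From mathcomp Require Import all_boot all_order all_algebra.
From mathcomp Require Export complex.
Set Implicit Arguments. Unset Strict Implicit. Unset Printing Implicit Defensive.
Import Order.TTheory GRing.Theory Num.Theory.
Local Open Scope ring_scope.

Section Subres.
Variable R : comNzRingType.

Definition pdeg (p : {poly R}) : nat := (size p).-1.

Definition mxentry p q (M : 'M[R]_(p, q)) (a : 'I_p) (j : nat) : R :=
  if insub j is Some j' then M a j' else 0.

(* determinant polynomial of a p x q matrix (p <= q):
   dp M = sum_{i=0}^{q-p} det[M_1, ..., M_{p-1}, M_{q-i}] x^i
   (columns 1-indexed in the paper, 0-indexed here). *)
Definition detpoly p q (M : 'M[R]_(p, q)) : {poly R} :=
  \sum_(i < (q - p).+1)
     \det (\matrix_(a < p, b < p)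
             mxentry M a (if (b.+1 < p)%N then (b : nat) else (q - 1 - i)%N)) *: 'X^i.

(* delta_0 for F = F_0 :: Fs and delta = (delta_1, ..., delta_t) *)
Definition delta0 (F : seq {poly R}) (dl : seq nat) : nat :=
  let d0 := pdeg (head (0 : {poly R}) F) in
  let vals := map (fun fd : {poly R} * nat => (pdeg fd.1 + fd.2)%N)
                  (filter (fun fd : {poly R} * nat => fd.2 != 0%N) (zip (behead F) dl)) in
  let mx := foldr maxn 0%N vals in
  if (vals != [::]) && (d0 <= mx)%N then (mx - d0)%N else 1%N.

Definition sylv_ncols (F : seq {poly R}) (dl : seq nat) : nat :=
  addn (delta0 F dl) (pdeg (head (0 : {poly R}) F)).

Definition sylv_rows (F : seq {poly R}) (dl : seq nat) : seq {poly R} :=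
  flatten [seq [seq 'X^e * fd.1 | e <- rev (iota 0 fd.2)]
          | fd <- zip F (delta0 F dl :: dl)].

(* generalized Sylvester matrix M_delta(F): row a is the coefficient vector of
   the a-th row polynomial w.r.t. x^{q-1}, ..., x, 1 *)
Definition gsylv (F : seq {poly R}) (dl : seq nat) :
  'M[R]_(size (sylv_rows F dl), sylv_ncols F dl) :=
  \matrix_(a < size (sylv_rows F dl), j < sylv_ncols F dl)
     (nth 0 (sylv_rows F dl) a)`_(sylv_ncols F dl - 1 - j).

Definition subres (F : seq {poly R}) (dl : seq nat) : {poly R} :=
  detpoly (gsylv F dl).

End Subres.

Definition mubar m (mu : 'I_m -> nat) (i : nat) : nat := #|[set j | (i <= mu j)%N]|.

(* Main.v *)
Require Import Defs.
From HB Require Import structures.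
From mathcomp Require Import all_boot all_order all_algebra.
From mathcomp Require Import complex zify.
Set Implicit Arguments. Unset Strict Implicit. Unset Printing Implicit Defensive.
Import Order.TTheory GRing.Theory Num.Theory.
Local Open Scope ring_scope.

Section DP.
Variable R : comNzRingType.
Variables (p q : nat) (M : 'M[R]_(p,q)).

Definition colmx (c : nat) : 'M[R]_p :=
  \matrix_(a < p, b < p) mxentry M a (if (b.+1 < p)%N then (b:nat) else c).

Definition rowpoly (a : 'I_p) : {poly R} :=
  \sum_(i < q) mxentry M a (q - 1 - i) *: 'X^i.

Section L.
Variable l : 'I_p.
Hypothesis hl : l.+1 = p.

Lemma det_colmx c :
  \det (colmx c) = \sum_a mxentry M a c * cofactor (colmx 0) a l.
Proof.
rewrite (expand_det_col _ l); apply: eq_bigr => a _.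
rewrite mxE hl ltnn; congr (_ * _).
rewrite /cofactor; congr (_ * _); congr (\det _).
apply/matrixP => x y; rewrite !mxE.
have -> : ((lift l y : nat).+1 < p)%N.
  rewrite /= /bump; have := ltn_ord y; case: (leqP l y) => /= h; lia.
by [].
Qed.

Lemma det_colmx_small c : (c.+1 < p)%N -> \det (colmx c) = 0.
Proof.
move=> hc; rewrite -det_tr.
have cp : (c < p)%N by lia.
apply: (@determinant_alternate _ _ _ l (Ordinal cp)).
  by apply/eqP => /(congr1 val) /=; lia.
by move=> x; rewrite !mxE hl ltnn /= hc.
Qed.

Lemma detpoly_rowpoly : (p <= q)%N ->
  detpoly M = \sum_a cofactor (colmx 0) a l *: rowpoly a.
Proof.
move=> hpq.
have e : forall a, rowpoly a =
   \sum_(0 <= i < (q - p).+1) mxentry M a (q - 1 - i) *: 'X^i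
 + \sum_((q - p).+1 <= i < q) mxentry M a (q - 1 - i) *: 'X^i.
  move=> a; rewrite /rowpoly -(big_mkord xpredT (fun i => mxentry M a (q - 1 - i) *: 'X^i)).
  by rewrite -big_cat_nat //; lia.
under eq_bigr do rewrite e scalerDr.
have sw : forall (lo hi : nat), \sum_a cofactor (colmx 0) a l *:
     (\sum_(lo <= i < hi) mxentry M a (q - 1 - i) *: 'X^i)
   = \sum_(lo <= i < hi) \det (colmx (q - 1 - i)) *: 'X^i.
  move=> lo hi; under eq_bigr do rewrite scaler_sumr.
  rewrite exchange_big /=; apply: eq_bigr => i _.
  rewrite det_colmx scaler_suml; apply: eq_bigr => a _.
  by rewrite scalerA mulrC.
rewrite big_split /= !sw.
rewrite [X in _ + X]big_nat [X in _ + X]big1 ?addr0; last first.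
  move=> i /andP[h1 h2]; rewrite det_colmx_small ?scale0r //; lia.
by rewrite /detpoly big_mkord.
Qed.
End L.

Lemma rowpolyE a : rowpoly a = \poly_(i < q) mxentry M a (q - 1 - i).
Proof. by rewrite poly_def. Qed.

Lemma coef_rowpoly a k :
  (rowpoly a)`_k = if (k < q)%N then mxentry M a (q - 1 - k) else 0.
Proof. by rewrite rowpolyE coef_poly. Qed.

Lemma detpolyE : detpoly M = \poly_(i < (q - p).+1) \det (colmx (q - 1 - i)).
Proof. by rewrite poly_def. Qed.

Lemma coef_detpoly k :
  (detpoly M)`_k = if (k < (q - p).+1)%N then \det (colmx (q - 1 - k)) else 0.
Proof. by rewrite detpolyE coef_poly. Qed.

Lemma size_detpoly : (size (detpoly M) <= (q - p).+1)%N.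
Proof. by rewrite detpolyE size_poly. Qed.

Lemma size_rowpoly a : (size (rowpoly a) <= q)%N.
Proof. by rewrite rowpolyE size_poly. Qed.

Lemma lead_detpoly : (p <= q)%N ->
  (detpoly M)`_(q - p) = \det (colmx p.-1).
Proof. by move=> hpq; rewrite coef_detpoly ltnSn; congr (\det (colmx _)); lia. Qed.

Lemma comb_small (v : 'rV[R]_p) : (p <= q)%N -> v *m colmx p.-1 = 0 ->
  (size (\sum_a v ord0 a *: rowpoly a)%R <= q - p)%N.
Proof.
move=> hpq hv; apply/leq_sizeP => k hk.
rewrite coef_sum; case: (ltnP k q) => hkq; last first.
  by rewrite big1 // => a _; rewrite coefZ coef_rowpoly ltnNge hkq mulr0.
have hc : (q - 1 - k < p)%N by lia.
have := congr1 (fun A : 'rV_p => A ord0 (Ordinal hc)) hv.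
rewrite !mxE => H; rewrite -[RHS]H; apply: eq_bigr => a _.
rewrite coefZ coef_rowpoly hkq !mxE /=.
by case: ifP => // h; congr (_ * mxentry _ _ _); lia.
Qed.
End DP.
Section Indep.
Variable K : fieldType.

Definition indepS (s : seq {poly K}) := forall v : nat -> K,
  \sum_(a < size s) v a *: s`_a = 0 -> forall a, (a < size s)%N -> v a = 0.

Definition blk (f : {poly K}) (d : nat) := [seq 'X^e * f | e <- rev (iota 0 d)].

Lemma size_blk f d : size (blk f d) = d.
Proof. by rewrite size_map size_rev size_iota. Qed.

Lemma nth_blk f d b : (b < d)%N -> (blk f d)`_b = 'X^(d - 1 - b) * f.
Proof.
move=> hb; rewrite (nth_map 0%N) ?size_rev ?size_iota // nth_rev ?size_iota //.
by rewrite nth_iota ?add0n; [congr ('X^_ * _); lia | lia].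
Qed.

Lemma dvdp_sum_ord n (D : {poly K}) (F : 'I_n -> {poly K}) :
  (forall i, D %| F i) -> D %| \sum_i F i.
Proof.
move=> h; elim/big_rec: _ => [|i x _ hx]; first exact: dvdp0.
exact: dvdp_add.
Qed.

Lemma dvdp_scale (D p : {poly K}) c : D %| p -> D %| c *: p.
Proof. by move=> h; rewrite -mul_polyC dvdp_mull. Qed.

Lemma indep_cat_blk s f d (D : {poly K}) :
  indepS s -> all (dvdp D) s ->
  (forall A : {poly K}, (size A <= d)%N -> D %| A * f -> A = 0) ->
  indepS (s ++ blk f d).
Proof.
move=> hs hD hA v.
rewrite size_cat size_blk big_split_ord /= => hsum.
set S1 := (X in X + _ = 0) in hsum.
set A := \sum_(b < d) v (size s + b)%N *: 'X^(d - 1 - b).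
have e2 : \sum_(i < d) v (rshift (size s) i) *: (s ++ blk f d)`_(rshift (size s) i) = A * f.
  rewrite /A mulr_suml; apply: eq_bigr => b _.
  by rewrite /= nth_cat ltnNge leq_addr /= addKn nth_blk // scalerAl.
rewrite e2 in hsum.
have hS1 : D %| S1.
  apply: dvdp_sum_ord => a; apply: dvdp_scale.
  rewrite /= nth_cat ltn_ord; exact: (allP hD) _ (mem_nth 0 (ltn_ord a)).
have A0 : A = 0.
  apply: hA.
    apply/leq_sizeP => j hj; rewrite /A coef_sumMXn big1 // => b /eqP hb; have := ltn_ord b; lia.
  by move/eqP: hsum; rewrite addrC addr_eq0 => /eqP ->; rewrite dvdpNr.
have vA : forall b, (b < d)%N -> v (size s + b)%N = 0.
  move=> b hb; have := congr1 (fun p : {poly K} => p`_(d - 1 - b)) A0.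
  rewrite coef0 /A coef_sumMXn (big_pred1 (Ordinal hb)) // => i /=.
  apply/eqP/eqP => [h|->//]; apply: val_inj => /=; have := ltn_ord i; lia.
have S10 : S1 = 0 by move: hsum; rewrite A0 mul0r addr0.
move=> a ha; case: (ltnP a (size s)) => has.
  apply: (hs v _ a has); rewrite -[RHS]S10 /S1; apply: eq_bigr => i _.
  by rewrite /= nth_cat ltn_ord.
by have := vA (a - size s)%N; rewrite subnKC //; apply; lia.
Qed.

Lemma indep_nil : indepS [::].
Proof. by move=> v _ a. Qed.

End Indep.
Section Gen.
Variable K : fieldType.

Lemma size_prodXe (J : finType) (Pj : pred J) (a : J -> K) (e : J -> nat) :
  size (\prod_(j | Pj j) ('X - (a j)%:P) ^+ (e j)) = (\sum_(j | Pj j) e j).+1.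
Proof.
elim/big_rec2: _ => [|j x p _ hp]; first by rewrite size_poly1.
have p0 : p != 0 by rewrite -size_poly_gt0 hp.
rewrite size_monicM ?monic_exp ?monicXsubC // size_exp_XsubC hp; lia.
Qed.

Lemma prod_dvd (J : finType) (Pj : pred J) (a : J -> K) (e : J -> nat) g :
  injective a ->
  (forall j, Pj j -> ('X - (a j)%:P) ^+ (e j) %| g) ->
  \prod_(j | Pj j) ('X - (a j)%:P) ^+ (e j) %| g.
Proof.
move=> ainj h; have := index_enum_uniq J.
elim: (index_enum J) => [|x s IH] /=; first by rewrite big_nil dvd1p.
case/andP => xs us; rewrite big_cons; case: ifP => Px; last exact: IH.
rewrite Gauss_dvdp ?h ?IH //.
apply: coprimep_expl; rewrite coprimep_sym coprimep_XsubC rootE horner_prod.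
rewrite prodf_seq_neq0; apply/allP => j js; apply/implyP => _.
rewrite horner_exp hornerXsubC expf_neq0 // subr_eq0; apply/eqP => /ainj ejx.
by move: xs; rewrite ejx js.
Qed.

End Gen.

Section Core.
Variable K : numFieldType.
Variables (m : nat) (r : 'I_m -> K) (mu : 'I_m -> nat) (lc : K) (P : {poly K}).
Hypothesis r_inj : injective r.
Hypothesis lc0 : lc != 0.
Hypothesis hP : P = lc *: \prod_(j < m) ('X - (r j)%:P) ^+ mu j.

Definition Pi (t : nat) :=
  \prod_(j < m | (t < mu j)%N) ('X - (r j)%:P) ^+ (mu j - t).

Lemma P_neq0 : P != 0.
Proof. by rewrite -size_poly_gt0 hP size_scale // size_prodXe. Qed.

Lemma sizeP : size P = (\sum_j mu j).+1.
Proof. by rewrite hP size_scale // size_prodXe. Qed.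

Lemma mult_loc j k : (k <= mu j)%N ->
  exists Q, P^`(k) = ('X - (r j)%:P) ^+ (mu j - k) * Q /\ ~~ root Q (r j).
Proof.
elim: k => [_|k IH hk].
  exists (lc *: \prod_(j' < m | j' != j) ('X - (r j')%:P) ^+ mu j'); split.
    by rewrite derivn0 hP (bigD1 j) //= subn0 scalerAr.
  rewrite rootE hornerZ horner_prod mulf_eq0 negb_or lc0 /= prodf_seq_neq0.
  apply/allP => j' _; apply/implyP => hj.
  rewrite horner_exp hornerXsubC expf_neq0 // subr_eq0; apply/eqP => /r_inj ejj.
  by move: hj; rewrite ejj eqxx.
have [Q [eQ nQ]] := IH (ltnW hk).
set t := (mu j - k.+1)%N.
have et : (mu j - k = t.+1)%N by rewrite /t; lia.
exists (Q *+ t.+1 + ('X - (r j)%:P) * Q^`()); split.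
  rewrite derivnS eQ et derivM deriv_exp derivXsubC mul1r /=.
  by rewrite mulrDr exprSr -mulrA mulrnAl mulrnAr.
rewrite rootE hornerD hornerMn hornerM hornerXsubC subrr mul0r addr0.
by rewrite mulrn_eq0 negb_or /= nQ.
Qed.

Lemma Pi_dvd t k : (k <= t)%N -> Pi t %| P^`(k).
Proof.
move=> hkt; apply: prod_dvd => // j hj.
have [Q [eQ _]] := mult_loc (k:=k) (j:=j) ltac:(lia).
rewrite eQ; apply: dvdp_mulr; apply: dvdp_exp2l; lia.
Qed.

Lemma root_of_dvd k (A : {poly K}) : (0 < k)%N -> Pi k.-1 %| A * P^`(k) ->
  forall j, (k <= mu j)%N -> root A (r j).
Proof.
move=> k0 hd j hj.
have [Q [eQ nQ]] := mult_loc hj.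
have h1 : ('X - (r j)%:P) ^+ (mu j - k).+1 %| A * P^`(k).
  apply: dvdp_trans hd; rewrite /Pi (bigD1 j) /=; last lia.
  have -> : (mu j - k.-1 = (mu j - k).+1)%N by lia.
  exact: dvdp_mulr.
move: h1; rewrite eQ exprSr mulrCA dvdp_mul2l ?expf_neq0 ?polyXsubC_eq0 //.
by rewrite dvdp_XsubCl rootM (negbTE nQ) orbF.
Qed.

Lemma A_zero k (A : {poly K}) : (0 < k)%N -> (size A <= mubar mu k)%N ->
  Pi k.-1 %| A * P^`(k) -> A = 0.
Proof.
move=> k0 hs hd.
apply: (@roots_geq_poly_eq0 _ A [seq r j | j <- enum [set j | (k <= mu j)%N]]).
- apply/allP => x /mapP [j]; rewrite mem_enum inE => hj ->.
  exact: root_of_dvd hd j hj.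
- by rewrite map_inj_uniq // enum_uniq.
- by rewrite size_map -cardE.
Qed.


Definition dd k := if k == 0%N then m.-1 else mubar mu k.
Definition rowsL j := flatten [seq blk (P^`(k)) (dd k) | k <- iota 0 j.+1].

Lemma rowsL_S j : rowsL j.+1 = rowsL j ++ blk (P^`(j.+1)) (mubar mu j.+1).
Proof. by rewrite /rowsL -addn1 iotaD map_cat flatten_cat /= cats0. Qed.

Lemma all_flatten_ (T : Type) (a : pred T) (ss : seq (seq T)) :
  all a (flatten ss) = all (all a) ss.
Proof. by elim: ss => //= s ss IH; rewrite all_cat IH. Qed.

Lemma rowsL_dvd D j : (forall k, (k <= j)%N -> D %| P^`(k)) -> all (dvdp D) (rowsL j).
Proof.
move=> h; rewrite /rowsL all_flatten_ all_map; apply/allP => k.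
rewrite mem_iota => /andP[_ hk] /=.
rewrite all_map; apply/allP => e _ /=; apply: dvdp_mull; apply: h; lia.
Qed.

Lemma rowsL_indep j : indepS (rowsL j).
Proof.
elim: j => [|j IH].
  rewrite /rowsL /= cats0 -[blk _ _]cat0s.
  apply: (indep_cat_blk (D := 0)) => //.
  move=> A _; rewrite dvd0p mulf_eq0 (negbTE P_neq0) orbF; exact/eqP.
rewrite rowsL_S; apply: (indep_cat_blk (D := Pi j)) => //.
  by apply: rowsL_dvd => k hk; apply: Pi_dvd.
by move=> A hA hd; apply: (A_zero (k:=j.+1)).
Qed.

Lemma mubar_le k : (mubar mu k <= m)%N.
Proof. by rewrite /mubar (leq_trans (max_card _)) ?card_ord. Qed.

Lemma mubar1 : (forall j, 0 < mu j)%N -> mubar mu 1 = m.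
Proof.
move=> h; rewrite /mubar (_ : [set j | _] = setT) ?cardsT ?card_ord //.
by apply/setP=> j; rewrite !inE h.
Qed.

Lemma mubar_sum k : mubar mu k = (\sum_j (k <= mu j) : nat)%N.
Proof.
rewrite /mubar -sum1_card big_mkcond /=; apply: eq_bigr => j _.
by rewrite inE; case: (k <= mu j)%N.
Qed.

Lemma iotaSr' a n : iota a n.+1 = iota a n ++ [:: (a + n)%N].
Proof. by rewrite -addn1 iotaD. Qed.

Lemma sumS i : (\sum_(k <- iota 1 i) mubar mu k + \sum_j (mu j - i) = \sum_j mu j)%N.
Proof.
elim: i => [|i IH]; first by rewrite big_nil add0n; apply: eq_bigr => j _; rewrite subn0.
rewrite iotaSr' big_cat big_seq1 /= -addnA add1n -IH; congr (_ + _)%N.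
rewrite mubar_sum -big_split /=; apply: eq_bigr => j _.
by case: (leqP i.+1 (mu j)) => h /=; lia.
Qed.

Lemma size_Pi t : size (Pi t) = (\sum_j (mu j - t)).+1.
Proof.
rewrite /Pi size_prodXe big_mkcond /=; congr (_.+1); apply: eq_bigr => j _.
by case: ltnP => h //; lia.
Qed.


Lemma size_deriv_leq (p : {poly K}) : (size p^`() <= (size p).-1)%N.
Proof. apply/leq_sizeP => j hj; rewrite coef_deriv nth_default ?mul0rn //.
by apply: leq_trans (leqSpred (size p)) _; rewrite ltnS. Qed.

Lemma size_derivn_leq (p : {poly K}) k : (size p^`(k) <= size p - k)%N.
Proof.
elim: k => [|k IH]; first by rewrite derivn0 subn0.
rewrite derivnS; apply: leq_trans (size_deriv_leq _) _.
by rewrite subnS -!subn1 leq_sub2r.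
Qed.

Lemma size_deriv_eq (p : {poly K}) : size p^`() = (size p).-1.
Proof.
apply/eqP; rewrite eqn_leq size_deriv_leq /=.
case E: (size p) => [|[|s]] //=.
have p0 : p != 0 by rewrite -size_poly_gt0 E.
have hl : p`_s.+1 != 0 by have := lead_coef_eq0 p; rewrite lead_coefE E /= (negbTE p0) => ->.
rewrite leqNgt; apply/negP => hs.
have := coef_deriv p s; rewrite [p^`()`_s]nth_default; last by rewrite -ltnS.
by move/esym/eqP; rewrite mulrn_eq0 /= (negbTE hl).
Qed.

Lemma foldr_maxn_le (s : seq nat) b : all (fun x => x <= b)%N s -> (foldr maxn 0 s <= b)%N.
Proof. by elim: s => //= x s IH /andP[hx hs]; rewrite geq_max hx IH. Qed.

Lemma delta0_val i : (1 <= i)%N -> (forall j, 0 < mu j)%N -> (1 <= m)%N -> (2 <= size P)%N ->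
  delta0 [seq P^`(k) | k <- iota 0 i.+1] [seq mubar mu k | k <- iota 1 i] = m.-1.
Proof.
move=> hi hmu hm hP2; case: i hi => // i _.
rewrite /delta0 /= zip_map filter_map /= mubar1 //.
have m0 : (m != 0)%N by rewrite -lt0n.
rewrite m0 /=.
set F := foldr maxn 0 _.
have hd1 : pdeg P^`() = (pdeg P).-1 by rewrite /pdeg size_deriv_eq.
have hF : (F <= (pdeg P).-1 + m)%N.
  apply: foldr_maxn_le; rewrite !all_map; apply/allP => k.
  rewrite mem_filter mem_iota => /andP[_ /andP[hk _]] /=.
  have := size_derivn_leq P k; have := mubar_le k; move: hk; rewrite /pdeg.
  move: (k : nat) => k'; move: (size P^`(k')) (size P) (mubar mu k') => a b c; lia.
rewrite hd1 (maxn_idPl hF).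
have -> : (pdeg P <= (pdeg P).-1 + m)%N by rewrite /pdeg; lia.
rewrite /pdeg /=; move: hP2 hm; move: (size P) => s; lia.
Qed.


Lemma rows_eq i : (1 <= i)%N -> (forall j, 0 < mu j)%N -> (1 <= m)%N -> (2 <= size P)%N ->
  sylv_rows [seq P^`(k) | k <- iota 0 i.+1] [seq mubar mu k | k <- iota 1 i] = rowsL i.
Proof.
move=> hi hmu hm hP2; rewrite /sylv_rows delta0_val // /rowsL /= zip_map.
congr (flatten (_ :: _)); rewrite -map_comp; apply/eq_in_map => k.
rewrite mem_iota => /andP[hk _] /=; rewrite /dd; case: eqP => // k0.
by rewrite k0 in hk.
Qed.

Lemma size_rowsL j : size (rowsL j) = (m.-1 + \sum_(k <- iota 1 j) mubar mu k)%N.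
Proof.
elim: j => [|j IH]; first by rewrite /rowsL /= cats0 size_blk big_nil addn0.
by rewrite rowsL_S size_cat size_blk IH iotaSr' big_cat big_seq1 addnA.
Qed.

Lemma rowsL_size j : (forall j, 0 < mu j)%N -> (1 <= m)%N ->
  all (fun x : {poly K} => size x <= m.-1 + (size P).-1)%N (rowsL j).
Proof.
move=> hmu hm; rewrite /rowsL all_flatten_ all_map; apply/allP => k _ /=.
rewrite all_map; apply/allP => e /=; rewrite mem_rev mem_iota add0n => /andP[_ he].
apply: leq_trans (size_polyMleq _ _) _; rewrite size_polyXn.
have h1 := size_derivn_leq P k; have h2 := mubar_le k.
move: he; rewrite /dd; case: eqP => [->|k0].
  rewrite derivn0; move: (size P) => s; lia.
move: (size P^`(k)) (size P) (mubar mu k) h1 h2 k0 => a b c; lia.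
Qed.


Lemma mxentry_lt p q (M : 'M[K]_(p,q)) a j (h : (j < q)%N) :
  mxentry M a j = M a (Ordinal h).
Proof. by rewrite /mxentry insubT. Qed.

Lemma m_pos : (2 <= size P)%N -> (1 <= m)%N.
Proof.
move=> h2; case: (pickP (fun j : 'I_m => true)) => [j _ | h].
  by have := ltn_ord j; lia.
move: h2; rewrite sizeP big1 // => j _; by have := h j.
Qed.

Theorem core i : (1 <= i <= (size P).-1)%N -> (forall j, 0 < mu j)%N ->
  (exists2 c, c != 0 & subres [seq P^`(k) | k <- iota 0 i.+1]
                               [seq mubar mu k | k <- iota 1 i] = c *: Pi i) /\
  (forall D, (forall k, (k <= i)%N -> D %| P^`(k)) ->
     D %| subres [seq P^`(k) | k <- iota 0 i.+1] [seq mubar mu k | k <- iota 1 i]).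
Proof.
move=> /andP[hi1 hin] hmu.
set F := [seq P^`(k) | k <- iota 0 i.+1].
set dl := [seq mubar mu k | k <- iota 1 i].
have sP := sizeP.
have hP2 : (2 <= size P)%N by move: hi1 hin; move: (size P) => s; lia.
have hm := m_pos hP2.
set rows := sylv_rows F dl.
have Erows : rows = rowsL i by exact: rows_eq.
have hsum := sumS i.
set p := size rows.
have Ep : p = (m.-1 + \sum_(k <- iota 1 i) mubar mu k)%N by rewrite /p Erows size_rowsL.
set q := sylv_ncols F dl.
have Eq : q = (m.-1 + (size P).-1)%N.
  by rewrite /q /sylv_ncols delta0_val // /pdeg /= derivn0.
have Sge : (m <= \sum_(k <- iota 1 i) mubar mu k)%N.
  case: i hi1 {F dl rows Erows hsum p Ep q Eq hin} => // i _.
  by rewrite /= big_cons mubar1 // leq_addr.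
have p0 : (0 < p)%N by rewrite Ep; lia.
have hpq : (p <= q)%N.
  rewrite Ep Eq; move: hsum; rewrite -(addn0 (\sum_j mu j)) => hsum.
  move: hsum sP; move: (\sum_(k <- iota 1 i) mubar mu k) (\sum_j (mu j - i))%N
    (\sum_j mu j) (size P) => a b c d; lia.
have hl : (p.-1 < p)%N by lia.
pose l : 'I_p := Ordinal hl.
have hrs : all (fun x : {poly K} => size x <= q)%N rows.
  by rewrite Eq Erows; apply: rowsL_size.
have hrow : forall a : 'I_p, rowpoly (gsylv F dl) a = rows`_a.
  move=> a; apply/polyP => k; rewrite coef_rowpoly.
  case: ltnP => hk.
    have hk' : (q - 1 - k < q)%N by lia.
    rewrite (mxentry_lt _ _ hk') mxE /=; congr (_`_ _); lia.
  rewrite nth_default //; apply: leq_trans hk.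
  exact: (allP hrs) _ (mem_nth 0 (ltn_ord a)).
have Esub : subres F dl = \sum_a cofactor (colmx (gsylv F dl) 0) a l *: rows`_a.
  rewrite /subres (@detpoly_rowpoly _ _ _ _ l) //; last by rewrite /= prednK.
  by apply: eq_bigr => a _; rewrite hrow.
have hrd : forall D, (forall k, (k <= i)%N -> D %| P^`(k)) -> forall a : 'I_p, D %| rows`_a.
  move=> D hD a; have := rowsL_dvd hD; rewrite -Erows => /allP; apply.
  exact: mem_nth.
have Ddvd : forall D, (forall k, (k <= i)%N -> D %| P^`(k)) -> D %| subres F dl.
  move=> D hD; rewrite Esub; apply: dvdp_sum_ord => a; apply: dvdp_scale.
  exact: hrd.
split => //.
have hPi : Pi i %| subres F dl by apply: Ddvd => k hk; apply: Pi_dvd.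
have szPi : size (Pi i) = (q - p).+1.
  rewrite size_Pi Ep Eq; move: hsum sP hpq; rewrite Ep Eq.
  move: (\sum_(k <- iota 1 i) mubar mu k) (\sum_j (mu j - i))%N
    (\sum_j mu j) (size P) => a b c d; lia.
have lead0 : (subres F dl)`_(q - p) != 0.
  rewrite /subres lead_detpoly //; apply/negP => /det0P [v v0 hv].
  have hs := comb_small hpq hv.
  have S0 : \sum_a v ord0 a *: rowpoly (gsylv F dl) a = 0.
    apply/eqP; apply: contraTT hs => hS; rewrite -ltnNge.
    have hd : Pi i %| \sum_a v ord0 a *: rowpoly (gsylv F dl) a.
      apply: dvdp_sum_ord => a; apply: dvdp_scale; rewrite hrow.
      by apply: hrd => k hk; apply: Pi_dvd.
    by have := dvdp_leq hS hd; rewrite szPi.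
  have ind : indepS rows by rewrite Erows; exact: rowsL_indep.
  pose w k := if (insub k : option 'I_p) is Some a then v ord0 a else 0.
  have hw : \sum_(a < size rows) w a *: rows`_a = 0.
    rewrite -[RHS]S0; apply: eq_bigr => a _.
    by rewrite hrow /w valK.
  move/eqP: v0; apply; apply/rowP => b; rewrite mxE.
  have := ind w hw b (ltn_ord b); rewrite /w valK.
  by rewrite (ord1 0).
have sub0 : subres F dl != 0 by apply: contraNneq lead0 => ->; rewrite coef0.
have szsub : size (subres F dl) = (q - p).+1.
  apply/eqP; rewrite eqn_leq size_detpoly /=.
  rewrite ltnNge; apply/negP => hs; move: lead0.
  by rewrite nth_default ?eqxx.
have : Pi i %= subres F dl by rewrite -dvdp_size_eqp // szPi szsub.
case/eqpP => [[c1 c2] /andP[/= c10 c20] /= e].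
exists (c1 / c2); first by rewrite mulf_neq0 ?invr_eq0.
apply: (scalerI c20); by rewrite -e scalerA mulrCA divff // mulr1.
Qed.

End Core.

Section Transfer.
Variables (F0 : fieldType) (K0 : idomainType) (f : {rmorphism F0 -> K0}).
Local Notation g := (map_poly f).

Lemma pdeg_map (p : {poly F0}) : pdeg (g p) = pdeg p.
Proof. by rewrite /pdeg size_map_poly. Qed.

Lemma vals_map (s : seq {poly F0}) (dl : seq nat) :
  [seq (pdeg fd.1 + fd.2)%N | fd <- filter (fun fd : {poly (K0 : comNzRingType)} * nat => fd.2 != 0%N) (zip (map g s) dl)]
  = [seq (pdeg fd.1 + fd.2)%N | fd <- filter (fun fd : {poly (F0 : comNzRingType)} * nat => fd.2 != 0%N) (zip s dl)].
Proof.
elim: s dl => [|x s IH] [|d dl] //=.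
by case: (d != 0%N) => /=; rewrite IH // pdeg_map.
Qed.

Lemma delta0_map (F : seq {poly F0}) dl : delta0 (map g F) dl = delta0 F dl.
Proof.
rewrite /delta0; case: F => [|x F] /=; first by case: dl.
by rewrite vals_map pdeg_map.
Qed.

Lemma flat_map (F : seq {poly F0}) (ds : seq nat) :
  flatten [seq [seq 'X^e * fd.1 | e <- rev (iota 0 fd.2)] | fd <- zip (map g F) ds]
  = map g (flatten [seq [seq 'X^e * fd.1 | e <- rev (iota 0 fd.2)] | fd <- zip F ds]).
Proof.
elim: F ds => [|x F IH] [|d ds] //=.
rewrite map_cat IH; congr (_ ++ _); rewrite -map_comp; apply: eq_map => e /=.
by rewrite rmorphM /= map_polyXn.
Qed.

Lemma sylv_rows_map (F : seq {poly F0}) dl :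
  sylv_rows (map g F) dl = map g (sylv_rows F dl).
Proof. by rewrite /sylv_rows delta0_map flat_map. Qed.

Lemma sylv_ncols_map (F : seq {poly F0}) dl :
  sylv_ncols (map g F) dl = sylv_ncols F dl.
Proof.
rewrite /sylv_ncols delta0_map; case: F => [|x F] /=.
  by rewrite /delta0 /pdeg /= !size_poly0; case: dl.
by rewrite pdeg_map.
Qed.

Lemma detpoly_eq (R : comNzRingType) p1 q1 p2 q2 (M1 : 'M[R]_(p1,q1)) (M2 : 'M[R]_(p2,q2)) :
  p1 = p2 -> q1 = q2 ->
  (forall a b (ha : (a < p1)%N) (hb : (b < q1)%N) (ha' : (a < p2)%N) (hb' : (b < q2)%N),
    M1 (Ordinal ha) (Ordinal hb) = M2 (Ordinal ha') (Ordinal hb')) ->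
  detpoly M1 = detpoly M2.
Proof.
move=> e1 e2; subst p2 q2 => h; congr detpoly; apply/matrixP => [[a ha] [b hb]].
exact: h.
Qed.

Lemma detpoly_map p q (M : 'M[F0]_(p,q)) : g (detpoly M) = detpoly (map_mx f M).
Proof.
rewrite /detpoly rmorph_sum; apply: eq_bigr => i _.
rewrite /= map_polyZ map_polyXn -det_map_mx; congr (\det _ *: _).
apply/matrixP => a b; rewrite !mxE /mxentry.
by case: insubP => [j _ _|_]; rewrite ?mxE ?rmorph0.
Qed.

Lemma subres_map (F : seq {poly F0}) dl : g (subres F dl) = subres (map g F) dl.
Proof.
rewrite /subres detpoly_map; apply: detpoly_eq.
- by rewrite sylv_rows_map size_map.
- by rewrite sylv_ncols_map.
move=> a b ha hb ha' hb'; rewrite !mxE /= sylv_ncols_map sylv_rows_map.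
by rewrite (nth_map 0) // coef_map.
Qed.

End Transfer.

Lemma big_gcdp_dvd (R0 : idomainType) n (G : nat -> {poly R0}) k :
  (k < n)%N -> \big[@gcdp R0/0]_(j < n) G j %| G k.
Proof.
elim: n G k => [|n IH] G k hk; first by rewrite ltn0 in hk.
rewrite big_ord_recl /=.
have -> : \big[@gcdp R0/0]_(j < n) G (lift ord0 j) = \big[@gcdp R0/0]_(j < n) G j.+1.
  by apply: eq_bigr => j _; rewrite lift0.
case: k hk => [|k] hk; first exact: dvdp_gcdl.
exact: dvdp_trans (dvdp_gcdr _ _) (IH (fun j => G j.+1) k hk).
Qed.

Lemma dvd_big_gcdp (R0 : idomainType) n (G : nat -> {poly R0}) D :
  (forall k, (k < n)%N -> D %| G k) -> D %| \big[@gcdp R0/0]_(j < n) G j.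
Proof.
elim: n G => [|n IH] G h; first by rewrite big_ord0 dvdp0.
rewrite big_ord_recl /=.
have -> : \big[@gcdp R0/0]_(j < n) G (lift ord0 j) = \big[@gcdp R0/0]_(j < n) G j.+1.
  by apply: eq_bigr => j _; rewrite lift0.
rewrite dvdp_gcd h //=; apply: (IH (fun j => G j.+1)) => k hk; apply: h; lia.
Qed.

Unset Implicit Arguments.

Theorem mainTheorem1 (R : rcfType) (P : {poly R}) (m : nat)
    (r : 'I_m -> R[i]) (mu : 'I_m -> nat) :
  (2 <= pdeg P)%N ->
  injective r ->
  (forall j, 0 < mu j)%N ->
  (forall j k : 'I_m, (j <= k)%N -> (mu k <= mu j)%N) ->
  map_poly (real_complex R) P
    = (lead_coef P)%:C%C *: \prod_(j < m) ('X - (r j)%:P) ^+ mu j ->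
  forall i : nat, (1 <= i <= pdeg P)%N ->
    let Ri := subres [seq P^`(k) | k <- iota 0 i.+1] [seq mubar mu k | k <- iota 1 i] in
    let Gi := \big[@gcdp R/0]_(k < i.+1) P^`(k) in
    (exists2 c : R[i], c != 0 &
       map_poly (real_complex R) Ri
         = c *: \prod_(j < m | (i < mu j)%N) ('X - (r j)%:P) ^+ (mu j - i))
    /\ (exists2 c : R, c != 0 & Ri = c *: Gi).
Proof.
move=> hdeg rinj hmu _ hP i hi Ri Gi.
set g := map_poly (real_complex R).
have P0 : P != 0 by rewrite -size_poly_gt0; move: hdeg; rewrite /pdeg; move: (size P) => s; lia.
have lc0 : (lead_coef P)%:C%C != 0 :> R[i].
  by rewrite (fmorph_eq0 (real_complex R)) lead_coef_eq0.
have hi' : (1 <= i <= (size (g P)).-1)%N by rewrite size_map_poly.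
have [[c c0 hc] hD] := core rinj lc0 hP hi' hmu.
have Eder : [seq (g P)^`(k) | k <- iota 0 i.+1] = map g [seq P^`(k) | k <- iota 0 i.+1].
  by rewrite -map_comp; apply: eq_map => k /=; rewrite derivn_map.
rewrite Eder -subres_map -/Ri in hc hD.
split; first by exists c.
have gG : g Gi = \big[@gcdp _/0]_(k < i.+1) g (P^`(k)).
  by rewrite /Gi (big_morph g (gcdp_map _) (map_poly0 _)).
have h1 : g Gi %| g Ri.
  apply: hD => k hk; rewrite gG derivn_map; apply: (big_gcdp_dvd (fun k => g P^`(k))); lia.
have h2 : g Ri %| g Gi.
  have -> : g Ri = c *: _ := hc.
  rewrite dvdpZl // gG.
  have := @dvd_big_gcdp _ i.+1 (fun k => g P^`(k)) (Pi r mu i).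
  apply => k hk /=.
rewrite /g -derivn_map; apply: (Pi_dvd rinj lc0 hP); lia.
have : Ri %= Gi by rewrite -(eqp_map (real_complex R)) /eqp h1 h2.
case/eqpP => [[c1 c2] /andP[/= c10 c20] /= e].
exists (c2 / c1); first by rewrite mulf_neq0 ?invr_eq0.
apply: (scalerI c10); by rewrite e scalerA mulrCA divff // mulr1.
Qed.
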